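(* Let $G$ be a finite group, $H\le G$, $g\in G$, and $C=H\cap H^g$. Then $\langle H,\psi_{g^{-1},H}(H)\rangle\cong I(\mathbb{Z}[H/C])\rtimes H$ (inside $\mathcal{U}(\mathbb{Z}G)$), where $h\in H$ acts on $I(\mathbb{Z}[H/C])$ by left multiplication by $h^{-1}$. In particular, the normal subgroup generated by the units $1+(1-h)g^{-1}\widetilde{H}$, $h\in H$, is free abelian of rank $[H:C]-1$.
   Context: $\widetilde{H}=\sum_{h\in H}h$; $\psi_{g^{-1},H}:H\to\mathcal{U}(\mathbb{Z}G)$, $h\mapsto h+(1-h)g^{-1}\widetilde{H}$. $H^g=g^{-1}Hg$. $I(\mathbb{Z}[H/C])$ is the kernel of the $\mathbb{Z}H$-module map $\mathbb{Z}[H/C]\to\mathbb{Z}$, $hC\mapsto1$. *)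

(* Defs.v *)
From HB Require Import structures.
From mathcomp Require Import all_boot all_order all_algebra all_fingroup.
Set Implicit Arguments. Unset Strict Implicit. Unset Printing Implicit Defensive.
Import GRing.Theory.
Local Open Scope ring_scope.

Definition ZG (gT : finGroupType) := {ffun gT -> int}.

Section GroupRing.
Variable gT : finGroupType.

Definition zgmul (u v : ZG gT) : ZG gT :=
  [ffun x => \sum_(y : gT) u y * v (y^-1 * x)%g].

Definition zgof (x : gT) : ZG gT := [ffun y => ((y == x) : nat)%:Z].
Definition zgone : ZG gT := zgof 1%g.
Definition zgadd (u v : ZG gT) : ZG gT := [ffun x => u x + v x].
Definition zgsub (u v : ZG gT) : ZG gT := [ffun x => u x - v x].

Definition hsum (H : {set gT}) : ZG gT := [ffun y => ((y \in H) : nat)%:Z].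

Definition psi (x : gT) (H : {set gT}) (h : gT) : ZG gT :=
  zgadd (zgof h) (zgmul (zgsub zgone (zgof h)) (zgmul (zgof x) (hsum H))).

Definition zginv (u v : ZG gT) : Prop := zgmul u v = zgone /\ zgmul v u = zgone.

Inductive gen (S : ZG gT -> Prop) : ZG gT -> Prop :=
| gen_one : gen S zgone
| gen_mul : forall s x, S s -> gen S x -> gen S (zgmul s x)
| gen_mulinv : forall s t x, S s -> zginv s t -> gen S x -> gen S (zgmul t x).

Definition normal_closure_in (S U : ZG gT -> Prop) : ZG gT -> Prop :=
  gen (fun u => exists k kinv w, [/\ gen S k, zginv k kinv, U w &
                                      u = zgmul (zgmul k w) kinv]).

(* Z[H/C]: integer functions on {set gT}, supported on the left cosets hC, h in H.
   I(Z[H/C]) : those with coefficient sum 0 (kernel of augmentation hC |-> 1). *)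
Definition in_aug_ideal (H C : {set gT}) (a : {ffun {set gT} -> int}) : Prop :=
  (forall X, X \notin lcosets C H -> a X = 0) /\ \sum_(X in lcosets C H) a X = 0.

(* action of h on Z[H/C] by left multiplication by h^-1:
   coefficient of X in h^-1 . a is the coefficient of hX in a *)
Definition actinv (h : gT) (a : {ffun {set gT} -> int}) : {ffun {set gT} -> int} :=
  [ffun X => a (lcoset X h)].

(* the semidirect product I(Z[H/C]) x| H for this (right) action:
   (a,h)(b,k) = (k^-1 . a + b, hk) *)
Definition sd_dom (H C : {set gT}) (p : {ffun {set gT} -> int} * gT) : Prop :=
  in_aug_ideal H C p.1 /\ p.2 \in H.

Definition sdmul (p q : {ffun {set gT} -> int} * gT) : {ffun {set gT} -> int} * gT :=
  (actinv q.2 p.1 + q.1, (p.2 * q.2)%g).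

End GroupRing.

(* Main.v *)
From HB Require Import structures.
Require Import Defs.
From mathcomp Require Import all_boot all_order all_algebra all_fingroup.
Set Implicit Arguments. Unset Strict Implicit. Unset Printing Implicit Defensive.
Import GRing.Theory.
Local Open Scope ring_scope.

Section Ring.
Variable gT : finGroupType.
Definition zg : Type := ZG gT.
HB.instance Definition _ := GRing.Zmodule.on zg.

Lemma zgmulA : associative (@zgmul gT).
Proof.
move=> u v w; apply/ffunP=> x; rewrite /zgmul !ffunE.
symmetry.
under eq_bigr => z _ do rewrite ffunE big_distrl /=.
rewrite exchange_big /=; apply: eq_bigr => y _.
rewrite (reindex_inj (mulgI y)) /= ffunE big_distrr /=; apply: eq_bigr => z _.
by rewrite mulKg mulrA invMg mulgA.
Qed.

Lemma zgmul1r : left_id (zgone gT) (@zgmul gT).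
Proof.
move=> u; apply/ffunP=> x; rewrite ffunE (bigD1 1%g) //= big1 ?addr0.
  by rewrite ffunE eqxx invg1 mul1g mul1r.
by move=> y /negbTE ny; rewrite ffunE ny mul0r.
Qed.

Lemma zgmulr1 : right_id (zgone gT) (@zgmul gT).
Proof.
move=> u; apply/ffunP=> x; rewrite ffunE (bigD1 x) //= big1 ?addr0.
  by rewrite ffunE mulVg eqxx mulr1.
move=> y ny; rewrite ffunE; case: eqP => [e|]; last by rewrite mulr0.
by move: ny; rewrite -(mulKVg y x) e mulg1 eqxx.
Qed.

Lemma zgmulDl : left_distributive (@zgmul gT) (+%R : zg -> zg -> zg).
Proof.
move=> u v w; apply/ffunP=> x; rewrite !ffunE -big_split /=.
by apply: eq_bigr => y _; rewrite ffunE mulrDl.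
Qed.

Lemma zgmulDr : right_distributive (@zgmul gT) (+%R : zg -> zg -> zg).
Proof.
move=> u v w; apply/ffunP=> x; rewrite !ffunE -big_split /=.
by apply: eq_bigr => y _; rewrite ffunE mulrDr.
Qed.

HB.instance Definition _ := GRing.Zmodule_isPzRing.Build zg
  zgmulA zgmul1r zgmulr1 zgmulDl zgmulDr.



Lemma zgmulE (u v : zg) : zgmul u v = u * v. Proof. by []. Qed.
Lemma zgoneE : zgone gT = 1 :> zg. Proof. by []. Qed.
Lemma zgaddE (u v : zg) : zgadd u v = u + v.
Proof. by apply/ffunP=> x; rewrite !ffunE. Qed.
Lemma zgsubE (u v : zg) : zgsub u v = u - v.
Proof. by apply/ffunP=> x; rewrite !ffunE. Qed.

Definition d (x : gT) : zg := zgof x.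

Lemma dmulE a (u : zg) z : (d a * u) z = u (a^-1 * z)%g.
Proof.
rewrite -zgmulE ffunE (bigD1 a) //= big1 ?addr0.
  by rewrite ffunE eqxx mul1r.
by move=> y /negbTE ny; rewrite ffunE ny mul0r.
Qed.

Lemma muldE a (u : zg) z : (u * d a) z = u (z * a^-1)%g.
Proof.
rewrite -zgmulE ffunE (bigD1 (z * a^-1)%g) //= big1 ?addr0.
  by rewrite ffunE invMg invgK mulgKV eqxx mulr1.
move=> y ny; rewrite ffunE; case: eqP => [e|]; last by rewrite mulr0.
by move: ny; rewrite -e invMg invgK mulKVg eqxx.
Qed.

Lemma dE a z : d a z = ((z == a) : nat)%:Z.
Proof. by rewrite ffunE. Qed.

Lemma dM x y : d (x * y)%g = d x * d y.
Proof.
apply/ffunP=> z; rewrite dmulE !dE; congr (_ %:Z); congr nat_of_bool.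
apply/eqP/eqP => [->|<-]; first by rewrite mulKg.
by rewrite mulKVg.
Qed.

Lemma d1 : d 1%g = 1. Proof. by []. Qed.

Lemma dV x : d x^-1 * d x = 1.
Proof. by rewrite -dM mulVg. Qed.
Lemma dVr x : d x * d x^-1 = 1.
Proof. by rewrite -dM mulgV. Qed.

End Ring.

Section Main.
Variable gT : finGroupType.
Variables (H : {group gT}) (g : gT).
Local Notation zg := (zg gT).
Local Notation d := (@d gT).
Let C := (H :&: (H :^ g))%g.
Let L := lcosets C H.
Let hs : zg := hsum H.
Let K : zg := d g^-1 * hs.

Lemma dhs m : m \in H -> d m * hs = hs.
Proof. by move=> Hm; apply/ffunP=> z; rewrite dmulE !ffunE groupMl ?groupV. Qed.
Lemma hsd m : m \in H -> hs * d m = hs.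
Proof. by move=> Hm; apply/ffunP=> z; rewrite muldE !ffunE groupMr ?groupV. Qed.
Lemma Kd m : m \in H -> K * d m = K.
Proof. by move=> Hm; rewrite /K -mulrA hsd. Qed.
Lemma dK c : c \in C -> d c * K = K.
Proof.
rewrite inE => /andP[_]; rewrite mem_conjg => Hc.
rewrite /K mulrA -dM -[(c * g^-1)%g](mulKg g) dM -mulrA.
have -> : (g * (c * g^-1))%g = (c ^ g^-1)%g by rewrite /conjg invgK.
by rewrite dhs.
Qed.

Lemma CH : C \subset H. Proof. exact: subsetIl. Qed.

Lemma L_H X x : X \in L -> x \in X -> x \in H.
Proof.
case/lcosetsP=> y Hy -> /lcosetP[c Cc ->].
by rewrite groupM // (subsetP CH).
Qed.

Lemma C_L : C \in L.
Proof. by apply/lcosetsP; exists 1%g; rewrite ?group1 ?lcoset1. Qed.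

Lemma L_act k (X : {set gT}) : k \in H -> ((k *: X)%g \in L) = (X \in L).
Proof.
have imp k' (Y : {set gT}) : k' \in H -> Y \in L -> (k' *: Y)%g \in L.
  move=> Hk /lcosetsP[y Hy ->]; apply/lcosetsP; exists (k' * y)%g.
    exact: groupM.
  by rewrite lcosetM.
move=> Hk; apply/idP/idP; last exact: imp.
by move=> /(imp k^-1%g) ; rewrite lcosetK; apply; rewrite groupV.
Qed.

Definition E (X : {set gT}) : zg := d (repr X) * K.

Lemma EP X x : X \in L -> x \in X -> E X = d x * K.
Proof.
move=> LX xX; have rX : repr X \in X by apply: (mem_repr x xX).
move: LX xX rX => /lcosetsP[y Hy ->] /lcosetP[c1 Cc1 ->] /lcosetP[c2 Cc2 rE].
by rewrite /E rE !dM -!mulrA (dK Cc2) (dK Cc1).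
Qed.

Lemma EC : E C = K.
Proof. by rewrite (EP C_L (group1 _)) d1 mul1r. Qed.


Definition Tf (a : {ffun {set gT} -> int}) : zg := \sum_(X in L) E X *~ a X.
Definition aug (a : {ffun {set gT} -> int}) : int := \sum_(X in L) a X.

Lemma TfD a b : Tf (a + b) = Tf a + Tf b.
Proof. by rewrite /Tf -big_split; apply: eq_bigr => X _; rewrite ffunE mulrzDr. Qed.
Lemma TfN a : Tf (- a) = - Tf a.
Proof. by rewrite /Tf -sumrN; apply: eq_bigr => X _; rewrite ffunE mulrNz. Qed.
Lemma Tf0 : Tf 0 = 0.
Proof. by rewrite /Tf big1 // => X _; rewrite ffunE mulr0z. Qed.
Lemma TfB a b : Tf (a - b) = Tf a - Tf b.
Proof. by rewrite TfD TfN. Qed.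
Lemma augD a b : aug (a + b) = aug a + aug b.
Proof. by rewrite /aug -big_split; apply: eq_bigr => X _; rewrite ffunE. Qed.
Lemma augN a : aug (- a) = - aug a.
Proof. by rewrite /aug -sumrN; apply: eq_bigr => X _; rewrite ffunE. Qed.
Lemma aug0 : aug 0 = 0.
Proof. by rewrite /aug big1 // => X _; rewrite ffunE. Qed.

Lemma Ed X m : m \in H -> E X * d m = E X.
Proof. by move=> Hm; rewrite /E -mulrA Kd. Qed.

Lemma reprL Y : Y \in L -> repr Y \in H.
Proof.
move=> LY; apply: (L_H LY); move: LY => /lcosetsP[y _ ->].
by apply: (mem_repr y); rewrite lcoset_refl.
Qed.

Lemma EE X Y : Y \in L -> E X * E Y = E X * K.
Proof. by move=> LY; rewrite {2}/E mulrA Ed // reprL. Qed.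

Lemma TfE a Y : Y \in L -> Tf a * E Y = Tf a * K.
Proof.
move=> LY; rewrite /Tf !mulr_suml; apply: eq_bigr => X _.
by rewrite !mulrzAl EE.
Qed.

Lemma TfTf a b : Tf a * Tf b = (Tf a * K) *~ aug b.
Proof.
rewrite {2}/Tf mulr_sumr /aug mulrz_sumr; apply: eq_bigr => Y LY.
by rewrite mulrzAr TfE.
Qed.

Lemma prodT a b : aug b = 0 -> (1 + Tf a) * (1 + Tf b) = 1 + Tf (a + b).
Proof.
move=> ab; rewrite mulrDl !mulrDr !mul1r mulr1 TfTf ab mulr0z addr0 TfD.
by rewrite -addrA [Tf b + _]addrC.
Qed.
Lemma actinvE (k : gT) a (X : {set gT}) : actinv k a X = a (k *: X)%g.
Proof. by rewrite ffunE lcosetE. Qed.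

Lemma conjE (k : gT) (X : {set gT}) : k \in H -> X \in L -> d k^-1 * E X * d k = E (k^-1 *: X)%g.
Proof.
move=> Hk LX; rewrite -mulrA Ed // {1}/E mulrA -dM.
rewrite (EP (x := (k^-1 * repr X)%g)) //; first by rewrite L_act ?groupV.
rewrite mem_lcoset invgK mulKVg; apply: (mem_repr (repr X)).
by move: LX => /lcosetsP[y _ ->]; apply: (mem_repr y); rewrite lcoset_refl.
Qed.

Lemma conjT k a : k \in H -> d k^-1 * Tf a * d k = Tf (actinv k a).
Proof.
move=> Hk; rewrite /Tf mulr_sumr mulr_suml.
rewrite [RHS](reindex_inj (can_inj (lcosetK k^-1%g))) /=.
apply: eq_big => [X|X LX]; first by rewrite L_act ?groupV.
by rewrite actinvE lcosetKV mulrzAr mulrzAl conjE.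
Qed.
Definition e (X : {set gT}) : {ffun {set gT} -> int} :=
  [ffun Y => ((Y == X) : nat)%:Z - ((Y == C) : nat)%:Z].

Lemma sum_ind (V : zmodType) (F : {set gT} -> V) X :
  X \in L -> \sum_(Y in L) F Y *~ ((Y == X) : nat)%:Z = F X.
Proof.
move=> LX; rewrite (bigD1 X) //= eqxx mulr1z big1 ?addr0 //.
by move=> Y /andP[_ /negbTE ->]; rewrite mulr0z.
Qed.

Lemma Tf_e X : X \in L -> Tf (e X) = E X - K.
Proof.
move=> LX; rewrite /Tf.
under eq_bigr => Y _ do rewrite ffunE mulrzBr.
by rewrite sumrB !sum_ind ?EC ?C_L.
Qed.

Lemma aug_e X : X \in L -> aug (e X) = 0.
Proof.
have si Z : Z \in L -> \sum_(Y in L) ((Y == Z) : nat)%:Z = 1.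
  move=> LZ; rewrite -(sum_ind (fun _ => 1 : int) LZ).
  by apply: eq_bigr => Y _; rewrite intz.
move=> LX; rewrite /aug.
under eq_bigr => Y _ do rewrite ffunE.
by rewrite sumrB si // si ?C_L // subrr.
Qed.

Lemma e_supp X : X \in L -> forall Y, Y \notin L -> e X Y = 0.
Proof.
move=> LX Y nY; rewrite ffunE.
have -> : (Y == X) = false by apply/eqP => eYX; rewrite eYX LX in nY.
have -> : (Y == C) = false by apply/eqP => eYX; rewrite eYX C_L in nY.
by [].
Qed.

Lemma psiE h : h \in H -> psi g^-1 H h = d h * (1 + Tf (e (h^-1 *: C)%g)).
Proof.
move=> Hh; have L1 : (h^-1 *: C)%g \in L by rewrite L_act ?groupV ?C_L.
rewrite Tf_e // (EP L1 (lcoset_refl _ _)) /psi zgaddE zgmulE zgsubE zgmulE.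
rewrite -/(d h) -/(d g^-1) -/hs zgoneE mulrDr mulr1 mulrBr [d h * (d h^-1 * _)]mulrA dVr mul1r mulrBl mul1r.
by rewrite addrA.
Qed.

Definition f (p : {ffun {set gT} -> int} * gT) : zg := d p.2 * (1 + Tf p.1).
Definition pinv (p : {ffun {set gT} -> int} * gT) := (- actinv p.2^-1 p.1, p.2^-1)%g.

Let Dm := sd_dom H C.

Lemma aug_act k a : k \in H -> aug (actinv k a) = aug a.
Proof.
move=> Hk; rewrite /aug [RHS](reindex_inj (can_inj (lcosetK k))) /=.
apply: eq_big => [X|X LX]; first by rewrite L_act.
by rewrite actinvE.
Qed.

Lemma augI_act k a : k \in H -> in_aug_ideal H C a -> in_aug_ideal H C (actinv k a).
Proof.
move=> Hk [sa ua]; split; last by rewrite -[LHS]/(aug _) aug_act.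
by move=> X nX; rewrite actinvE sa // L_act.
Qed.

Lemma augI_D a b : in_aug_ideal H C a -> in_aug_ideal H C b ->
  in_aug_ideal H C (a + b).
Proof.
move=> [sa ua] [sb ub]; split; last by rewrite -[LHS]/(aug _) augD /aug ua ub addr0.
by move=> X nX; rewrite ffunE sa // sb // addr0.
Qed.

Lemma augI_N a : in_aug_ideal H C a -> in_aug_ideal H C (- a).
Proof.
move=> [sa ua]; split; last by rewrite -[LHS]/(aug _) augN /aug ua oppr0.
by move=> X nX; rewrite ffunE sa // oppr0.
Qed.

Lemma augI_0 : in_aug_ideal H C 0.
Proof. by split; [move=> X _; rewrite ffunE | exact: aug0]. Qed.

Lemma augI_e X : X \in L -> in_aug_ideal H C (e X).
Proof. by move=> LX; split; [exact: e_supp | exact: aug_e]. Qed.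

Lemma Dm_mul p q : Dm p -> Dm q -> Dm (sdmul p q).
Proof.
case: p q => [a h] [b k] [/= Ia Hh] [/= Ib Hk]; split=> /=; last exact: groupM.
by apply: augI_D => //; apply: augI_act.
Qed.

Lemma Dm_inv p : Dm p -> Dm (pinv p).
Proof.
case: p => [a h] [/= Ia Hh]; split=> /=; last by rewrite groupV.
by apply: augI_N; apply: augI_act; rewrite ?groupV.
Qed.

Lemma conj1 k a : k \in H -> (1 + Tf a) * d k = d k * (1 + Tf (actinv k a)).
Proof.
move=> Hk; rewrite -conjT // mulrDr mulr1 !mulrA dVr mul1r mulrDl mul1r.
by [].
Qed.

Lemma f_hom p q : Dm p -> Dm q -> f (sdmul p q) = f p * f q.
Proof.
case: p q => [a h] [b k] [/= Ia Hh] [/= [_ ub] Hk].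
rewrite /f /= -mulrA [(1 + Tf a) * _]mulrA conj1 // !mulrA -dM -mulrA.
by rewrite prodT.
Qed.

Lemma f1 : f (0, 1%g) = 1.
Proof. by rewrite /f /= Tf0 addr0 d1 mulr1. Qed.

Lemma actinvK (k : gT) a : actinv k^-1 (actinv k a) = a.
Proof. by apply/ffunP=> X; rewrite !actinvE lcosetKV. Qed.
Lemma actinvKV (k : gT) a : actinv k (actinv k^-1 a) = a.
Proof. by apply/ffunP=> X; rewrite !actinvE lcosetK. Qed.
Lemma actinvN (k : gT) a : actinv k (- a) = - actinv k a.
Proof. by apply/ffunP=> X; rewrite !ffunE. Qed.

Lemma sd_inv_r p : sdmul p (pinv p) = (0, 1%g).
Proof. by case: p => a h; rewrite /sdmul /pinv /= addrN mulgV. Qed.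
Lemma sd_inv_l p : sdmul (pinv p) p = (0, 1%g).
Proof. by case: p => a h; rewrite /sdmul /pinv /= actinvN actinvKV addNr mulVg. Qed.

Lemma f_inv_r p : Dm p -> f p * f (pinv p) = 1.
Proof. by move=> Dp; rewrite -f_hom ?sd_inv_r ?f1 //; apply: Dm_inv. Qed.
Lemma f_inv_l p : Dm p -> f (pinv p) * f p = 1.
Proof. by move=> Dp; rewrite -f_hom ?sd_inv_l ?f1 //; apply: Dm_inv. Qed.

Lemma reprC X : X \in L -> (repr X *: C)%g = X.
Proof.
move=> /lcosetsP[y _ ->]; apply/lcoset_eqP.
by apply: (mem_repr y); rewrite lcoset_refl.
Qed.

Lemma E_at X Y : X \in L -> Y \in L ->
  E X (repr Y * g^-1)%g = ((X == Y) : nat)%:Z.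
Proof.
move=> LX LY; rewrite /E /K dmulE dmulE ffunE invgK.
congr (_ %:Z); congr nat_of_bool.
have -> : (g * ((repr X)^-1 * (repr Y * g^-1)))%g = (((repr X)^-1 * repr Y) ^ g^-1)%g.
  by rewrite /conjg invgK !mulgA.
rewrite -mem_conjg.
have -> : (((repr X)^-1 * repr Y)%g \in (H :^ g)%g) = (((repr X)^-1 * repr Y)%g \in C).
  by rewrite /C inE (groupM (groupVr (reprL LX)) (reprL LY)).
rewrite -mem_lcoset; apply/idP/eqP => [/lcoset_eqP|->]; last first.
  exact: lcoset_refl.
by rewrite !reprC.
Qed.

Lemma Tf_at c Y : Y \in L -> Tf c (repr Y * g^-1)%g = c Y.
Proof.
move=> LY; rewrite /Tf sum_ffunE -(sum_ind c LY); apply: eq_bigr => X LX.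
by rewrite ffunMzE E_at // !mulrzz mulrC.
Qed.

Lemma Tf_inj0 c : Tf c = 0 -> forall Y, Y \in L -> c Y = 0.
Proof. by move=> Tc0 Y LY; rewrite -(Tf_at c LY) Tc0 ffunE. Qed.

Lemma Tf_d m a : m \in H -> Tf a * d m = Tf a.
Proof.
by move=> Hm; rewrite /Tf mulr_suml; apply: eq_bigr => X _; rewrite mulrzAl Ed.
Qed.

Lemma f_inj p q : Dm p -> Dm q -> f p = f q -> p = q.
Proof.
case: p q => [a h] [b k] [/= [sa _] Hh] [/= [sb _] Hk]; rewrite /f /= => H1.
have hk : h = k.
  case: (eqVneq h k) => // nhk.
  have Hm : (h^-1 * k)%g \in H by rewrite groupM ?groupV.
  have eD : d k - d h = d h * Tf a - d k * Tf b.
    move: H1; rewrite !mulrDr !mulr1 => H1.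
    have -> : d h * Tf a = - d h + (d k + d k * Tf b) by rewrite -H1 addKr.
    by rewrite addrA addrK addrC.
  have inv : (d k - d h) * d (h^-1 * k)%g = d k - d h.
    by rewrite eD mulrBl -!mulrA !Tf_d.
  move: (congr1 (fun u : zg => u k) inv).
  rewrite muldE !ffunE invMg invgK mulgA mulgV mul1g eqxx.
  by rewrite (negbTE nhk) eq_sym (negbTE nhk).
subst k; congr (_, _); move: H1.
move/(congr1 (fun u => d h^-1 * u)); rewrite !mulrA dV !mul1r => /addrI.
move/eqP; rewrite -subr_eq0 -TfB => /eqP Tab.
apply/ffunP=> X; case: (boolP (X \in L)) => LX.
  by have := Tf_inj0 Tab LX; rewrite !ffunE => /eqP; rewrite subr_eq0 => /eqP.
by rewrite sa // sb.
Qed.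

Lemma gen_mulG (S : ZG gT -> Prop) x y : gen S x -> gen S y -> gen S (zgmul x y).
Proof.
elim=> [|s x' Ss _ IH|s t x' Ss st _ IH] Gy.
- by rewrite zgmulE zgoneE mul1r.
- by rewrite !zgmulE -mulrA; exact: (gen_mul Ss (IH Gy)).
- by rewrite !zgmulE -mulrA; exact: (gen_mulinv Ss st (IH Gy)).
Qed.

Lemma uniq_inv (x y t : zg) : x * y = 1 -> t * x = 1 -> t = y.
Proof. by move=> xy tx; rewrite -[t]mulr1 -xy mulrA tx mul1r. Qed.

Lemma aug_mulz b z : aug (b *~ z) = aug b *~ z.
Proof. by rewrite /aug mulrz_suml; apply: eq_bigr => X _; rewrite ffunMzE. Qed.

Lemma span_gen (Q : ZG gT -> Prop) :
  (forall X, X \in L -> gen Q (1 + Tf (e X)) /\ gen Q (1 + Tf (- e X))) ->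
  forall (I : Type) (r : seq I) (P : pred I) (F : I -> {set gT}) (z : I -> int),
  (forall i, P i -> F i \in L) ->
  gen Q (1 + Tf (\sum_(i <- r | P i) e (F i) *~ z i)).
Proof.
move=> hQ I r P F z FL.
have pw b : aug b = 0 -> gen Q (1 + Tf b) ->
    forall n, gen Q (1 + Tf (b *+ n)) /\ aug (b *+ n) = 0.
  move=> ab Gb; elim=> [|n [IH1 IH2]].
    by rewrite mulr0n Tf0 aug0 addr0; split => //; apply: gen_one.
  rewrite mulrS augD ab IH2 addr0 -prodT //; split => //.
  by rewrite -zgmulE; apply: gen_mulG.
have gz X k : X \in L -> gen Q (1 + Tf (e X *~ k)) /\ aug (e X *~ k) = 0.
  move=> LX; have [G1 G2] := hQ X LX; case: k => n.
    by rewrite -pmulrn; apply: pw => //; apply: aug_e.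
  rewrite NegzE mulrNz -pmulrn -mulNrn; apply: pw => //.
  by rewrite augN aug_e ?oppr0.
suff : gen Q (1 + Tf (\sum_(i <- r | P i) e (F i) *~ z i)) /\
       aug (\sum_(i <- r | P i) e (F i) *~ z i) = 0 by case.
apply: (big_rec (fun c => gen Q (1 + Tf c) /\ aug c = 0)).
  by rewrite Tf0 aug0 addr0; split => //; apply: gen_one.
move=> i c Pi [G1 A1]; have [G2 A2] := gz (F i) (z i) (FL i Pi).
rewrite augD A1 A2 addr0 -prodT //; split => //.
by rewrite -zgmulE; apply: gen_mulG.
Qed.

Lemma decomp a : in_aug_ideal H C a -> \sum_(X in L) e X *~ a X = a.
Proof.
move=> [sa ua]; apply/ffunP=> Y; rewrite sum_ffunE.
under eq_bigr => X _ do rewrite ffunMzE ffunE mulrzBl.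
rewrite sumrB -mulrz_sumr ua mulr0z subr0.
case: (boolP (Y \in L)) => LY.
  rewrite -(sum_ind a LY); apply: eq_bigr => X _.
  by rewrite !mulrzz mulrC eq_sym.
rewrite sa // big1 // => X LX; have -> : (Y == X) = false.
  by apply/eqP => eZX; rewrite eZX LX in LY.
exact: mul0rz.
Qed.

Let S := fun u : ZG gT => exists2 h, h \in H & (u = zgof h \/ u = psi g^-1 H h).

Lemma f0 h : f (0, h) = d h.
Proof. by rewrite /f /= Tf0 addr0 mulr1. Qed.

Lemma Dm0 h : h \in H -> Dm (0, h).
Proof. by move=> Hh; split => //; apply: augI_0. Qed.

Lemma S_f s : S s -> exists2 p, Dm p & f p = s.
Proof.
case=> h Hh [->|->].
  by exists (0, h); [apply: Dm0 | rewrite f0].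
have L1 : (h^-1 *: C)%g \in L by rewrite L_act ?groupV ?C_L.
by exists (e (h^-1 *: C)%g, h); [split => //; apply: augI_e | rewrite psiE].
Qed.

Lemma genS_D u : gen S u -> exists2 p, Dm p & f p = u.
Proof.
elim=> [|s x Ss _ [q Dq <-]|s t x Ss [st1 st2] _ [q Dq <-]].
- by exists (0, 1%g); [apply: Dm0 | rewrite f1].
- have [p Dp <-] := S_f Ss.
  by exists (sdmul p q); [apply: Dm_mul | rewrite f_hom].
- have [p Dp eS] := S_f Ss; rewrite -eS in st2.
  have -> : t = f (pinv p) by apply: (uniq_inv (f_inv_r Dp)).
  exists (sdmul (pinv p) q); last by rewrite f_hom //; apply: Dm_inv.
  by apply: Dm_mul => //; apply: Dm_inv.
Qed.

Lemma genS_gens X : X \in L -> gen S (1 + Tf (e X)) /\ gen S (1 + Tf (- e X)).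
Proof.
move=> LX; set x := repr X; have Hx : x \in H by apply: reprL.
have Hxi : x^-1%g \in H by rewrite groupV.
have eX : (x^-1^-1 *: C)%g = X by rewrite invgK reprC.
have Sd y : y \in H -> S (zgof y) by move=> Hy; exists y => //; left.
have Sp : S (psi g^-1 H x^-1) by exists x^-1%g => //; right.
have Dp : Dm (e X, x^-1%g) by split => //; apply: augI_e.
have fp : f (e X, x^-1%g) = psi g^-1 H x^-1 by rewrite psiE // eX.
split.
  have := gen_mul (Sd x Hx) (gen_mul Sp (gen_one S)).
  by rewrite !zgmulE zgoneE mulr1 psiE // eX mulrA -[zgof x]/(d x) dVr mul1r.
have st : zginv (psi g^-1 H x^-1) (f (pinv (e X, x^-1%g))).
  by rewrite -fp /zginv !zgmulE f_inv_r ?f_inv_l.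
have := gen_mulinv Sp st (gen_mul (Sd _ Hxi) (gen_one S)).
rewrite !zgmulE zgoneE mulr1 -[zgof x^-1]/(d x^-1) -f0 -f_hom; last 2 first.
- exact: Dm_inv.
- exact: Dm0.
rewrite /sdmul /pinv /= invgK actinvN actinvK addr0 mulgV /f /= d1 mul1r.
by [].
Qed.

Lemma D_genS p : Dm p -> gen S (f p).
Proof.
case: p => [a h] [/= Ia Hh]; rewrite /f /= -zgmulE.
apply: gen_mul; first by exists h => //; left.
rewrite -(decomp Ia); apply: (span_gen genS_gens) => X; exact.
Qed.

Let n := (#|H : C|%g - 1)%N.
Let L' := (L :\ C).

Lemma cardL' : #|L'| = n.
Proof.
rewrite /n -card_lcosets -/L (cardsD1 C L) C_L /=.
by rewrite add1n subSS subn0.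
Qed.

Definition Xs (i : 'I_n) : {set gT} := enum_val (cast_ord (esym cardL') i).

Lemma XsL' i : Xs i \in L'.
Proof. exact: enum_valP. Qed.
Lemma XsL i : Xs i \in L.
Proof. by have := XsL' i; rewrite in_setD1 => /andP[]. Qed.
Lemma XsC i : (Xs i == C) = false.
Proof. by have := XsL' i; rewrite in_setD1 => /andP[/negbTE]. Qed.
Lemma Xs_inj : injective Xs.
Proof. by move=> i j /enum_val_inj /cast_ord_inj. Qed.

Definition alpha (a : 'rV[int]_n) : {ffun {set gT} -> int} :=
  \sum_(i < n) e (Xs i) *~ a 0 i.
Definition phi (a : 'rV[int]_n) : zg := 1 + Tf (alpha a).

Lemma alphaD a b : alpha (a + b) = alpha a + alpha b.
Proof. by rewrite /alpha -big_split; apply: eq_bigr => i _; rewrite mxE mulrzDr. Qed.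
Lemma alpha0 : alpha 0 = 0.
Proof. by rewrite /alpha big1 // => i _; rewrite mxE mulr0z. Qed.

Lemma aug_alpha a : aug (alpha a) = 0.
Proof.
rewrite /alpha; apply: (big_ind (fun c => aug c = 0)).
- exact: aug0.
- by move=> x y ax ay; rewrite augD ax ay addr0.
- by move=> i _; rewrite aug_mulz aug_e ?XsL // mul0rz.
Qed.

Lemma alpha_at a j : alpha a (Xs j) = a 0 j.
Proof.
rewrite /alpha sum_ffunE (bigD1 j) //= big1 ?addr0.
  by rewrite ffunMzE ffunE eqxx XsC subr0 intz.
move=> i nij; rewrite ffunMzE ffunE XsC subr0.
have -> : (Xs j == Xs i) = false.
  by apply/eqP => /Xs_inj eji; rewrite eji eqxx in nij.
exact: mul0rz.
Qed.

Lemma phiD a b : phi (a + b) = phi a * phi b.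
Proof. by rewrite /phi prodT ?aug_alpha // alphaD. Qed.

Lemma phi_inj : injective phi.
Proof.
move=> a b; rewrite /phi => /addrI /eqP; rewrite -subr_eq0 -TfB => /eqP Tab.
apply/matrixP => i j; rewrite !ord1.
have := Tf_inj0 Tab (XsL j); rewrite !ffunE !alpha_at => /eqP.
by rewrite subr_eq0 => /eqP.
Qed.

Lemma sum_cast m (h : #|L'| = m) (G : {set gT} -> {ffun {set gT} -> int}) :
  \sum_(i < m) G (enum_val (cast_ord (esym h) i)) = \sum_(X in L') G X.
Proof.
rewrite [RHS]big_enum_val; case: m / h.
by apply: eq_bigr => i _; rewrite cast_ord_id.
Qed.

Lemma e_C : e C = 0.
Proof. by apply/ffunP=> Y; rewrite !ffunE subrr. Qed.

Definition beta (c : {ffun {set gT} -> int}) : 'rV[int]_n := \row_i c (Xs i).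

Lemma alpha_beta c : in_aug_ideal H C c -> alpha (beta c) = c.
Proof.
move=> Ic; rewrite -{2}(decomp Ic) (big_setD1 C C_L) e_C mul0rz /= add0r.
rewrite /alpha -(sum_cast cardL'); apply: eq_bigr => i _.
by rewrite mxE.
Qed.


Let U := fun u : ZG gT => exists2 h, h \in H &
  u = zgadd (zgone gT) (zgmul (zgsub (zgone gT) (zgof h)) (zgmul (zgof g^-1) (hsum H))).

Lemma U_form h : h \in H ->
  zgadd (zgone gT) (zgmul (zgsub (zgone gT) (zgof h)) (zgmul (zgof g^-1) (hsum H)))
  = 1 + Tf (- e (h *: C)%g).
Proof.
move=> Hh; have L1 : (h *: C)%g \in L by rewrite L_act ?C_L.
rewrite TfN Tf_e // (EP L1 (lcoset_refl _ _)) zgaddE !zgmulE zgsubE zgoneE.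
by rewrite -/(d h) -/(d g^-1) -/hs -/K mulrBl mul1r opprB.
Qed.

Let S' := fun u => exists k kinv w, [/\ gen S k, zginv k kinv, U w &
                                      u = zgmul (zgmul k w) kinv].

Lemma S'_form s : S' s -> exists2 c, in_aug_ideal H C c & s = 1 + Tf c.
Proof.
case=> k [kinv [w [Gk [_ ki] [h Hh ->] ->]]].
have [p Dp ek] := genS_D Gk; subst k.
have -> : kinv = f (pinv p) by apply: (uniq_inv (f_inv_r Dp)).
have L1 : (h *: C)%g \in L by rewrite L_act ?C_L.
have Dw : Dm (- e (h *: C)%g, 1%g) by split => /=; [apply: augI_N; apply: augI_e | apply: group1].
have fw : f (- e (h *: C)%g, 1%g) = 1 + Tf (- e (h *: C)%g) by rewrite /f d1 mul1r.
rewrite U_form // -fw !zgmulE -f_hom // -f_hom; last 2 first.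
- exact: Dm_mul.
- exact: Dm_inv.
set r := sdmul _ _.
have Dr : Dm r by apply: Dm_mul; [apply: Dm_mul | apply: Dm_inv].
exists r.1; first by case: Dr.
by rewrite /f /r /= mulg1 mulgV d1 mul1r.
Qed.

Lemma NC_phi u : normal_closure_in S U u -> exists a, phi a = u.
Proof.
elim=> [|s x Ss _ [a <-]|s t x Ss [st1 st2] _ [a <-]].
- by exists 0; rewrite /phi alpha0 Tf0 addr0.
- have [c Ic ->] := S'_form Ss.
  exists (beta c + a); rewrite phiD /phi alpha_beta //.
- have [c Ic es] := S'_form Ss; subst s.
  have -> : t = 1 + Tf (- c).
    apply: (uniq_inv _ st2).
    by rewrite prodT ?subrr ?Tf0 ?addr0 //; case: (augI_N Ic).
  exists (beta (- c) + a); rewrite phiD /phi alpha_beta //.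
  exact: augI_N.
Qed.

Lemma phi_NC a : normal_closure_in S U (phi a).
Proof.
rewrite /phi /alpha; apply: span_gen => [X LX|i _]; last exact: XsL.
set x := repr X; have Hx : x \in H by apply: reprL.
have eX : (x *: C)%g = X by apply: reprC.
set w := 1 + Tf (- e X).
have Uw : U w by exists x => //; rewrite U_form // eX.
have S'w : S' w.
  exists (zgone gT), (zgone gT), w; split => //.
  - exact: gen_one.
  - by rewrite /zginv zgmulE zgoneE mulr1.
  - by rewrite !zgmulE zgoneE mulr1 mul1r.
have ae : aug (e X) = 0 by apply: aug_e.
have aeN : aug (- e X) = 0 by rewrite augN ae oppr0.
split.
  have st : zginv w (1 + Tf (e X)).
    by rewrite /zginv !zgmulE zgoneE !prodT // ?addNr ?subrr Tf0 addr0.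
  have := gen_mulinv S'w st (gen_one _).
  by rewrite zgmulE zgoneE mulr1.
have := gen_mul S'w (gen_one _).
by rewrite zgmulE zgoneE mulr1.
Qed.

End Main.

Theorem proposition6p3 (gT : finGroupType) (H : {group gT}) (g : gT) :
  let C := (H :&: (H :^ g))%g in
  let S := fun u : ZG gT => exists2 h, h \in H & (u = zgof h \/ u = psi g^-1 H h) in
  let U := fun u : ZG gT => exists2 h, h \in H &
             u = zgadd (zgone gT) (zgmul (zgsub (zgone gT) (zgof h)) (zgmul (zgof g^-1) (hsum H))) in
  (exists f : {ffun {set gT} -> int} * gT -> ZG gT,
     [/\ forall p q, sd_dom H C p -> sd_dom H C q -> f p = f q -> p = q,
         forall p q, sd_dom H C p -> sd_dom H C q -> f (sdmul p q) = zgmul (f p) (f q) &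
         forall u, gen S u <-> exists2 p, sd_dom H C p & f p = u])
  /\
  (exists phi : 'rV[int]_(#|H : C|%g - 1)%N -> ZG gT,
     [/\ forall a b, phi (a + b) = zgmul (phi a) (phi b),
         injective phi &
         forall u, normal_closure_in S U u <-> exists a, phi a = u]).
Proof.
move=> C S U; split.
  exists (@f gT H g); split.
  - exact: f_inj.
  - exact: f_hom.
  - move=> u; split; first exact: genS_D.
    by case=> p Dp <-; apply: D_genS.
exists (@phi gT H g); split.
- exact: phiD.
- exact: phi_inj.
- move=> u; split; first exact: NC_phi.
  by case=> a <-; apply: phi_NC.
Qed.
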